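(* Let $n\ge 2$ and $q\ge 2$ be integers, let $E_q=\{0,1,\dots,q-1\}$, and let $A\subseteq E_q^n$ be a subset with $m=|A|\ge 2$. Let $R(A)$ denote the number of coordinates $i\in\{1,\dots,n\}$ such that the $i$-th coordinates of the elements of $A$ are not all equal, and let $D_A=\sum_{\{x,y\}\subseteq A,\ x\neq y} d_H(x,y)$, the sum of the Hamming distances over all unordered pairs of distinct elements of $A$. Then: (1) if $m/q\ge 1$, then \[\frac{2qD_A}{(q-1)m^2}\le R(A)\le \frac{D_A}{m-1};\] (2) if $m/q<1$ and $q>2$, then \[\frac{2(q-2)D_A}{(m^2-2)(q-2)-(m-2)^2}\le R(A)\le \frac{D_A}{m-1}.\]
   Context: $E_q^n$ is the set of all $n$-tuples $(x_1,\dots,x_n)$ with $x_i\in E_q$, equipped with the Hamming distance $d_H(x,y)=|\{i : x_i\neq y_i\}|$. Equivalently, $R(A)$ is the number of non-constant columns of the matrix whose rows are the elements of $A$ (the dimension of the smallest face of $E_q^n$ containing $A$, where a $k$-dimensional face is a set of vectors with $k$ coordinates varying freely and the other $n-k$ fixed). *)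

(* Defs.v *)
From mathcomp Require Import all_boot all_order all_algebra.
Set Implicit Arguments. Unset Strict Implicit. Unset Printing Implicit Defensive.
Import Order.TTheory GRing.Theory Num.Theory.

Definition word (n q : nat) := {ffun 'I_n -> 'I_q}.

Definition dH (n q : nat) (x y : word n q) : nat := #|[set i : 'I_n | x i != y i]|.

Definition Rk (n q : nat) (A : {set word n q}) : nat :=
  #|[set i : 'I_n | [exists x in A, exists y in A, x i != y i]]|.

(* D_A: sum of Hamming distances over unordered pairs {x,y} of distinct
   elements of A, i.e. half the sum over ordered pairs (d(x,x)=0). *)
Definition DA (n q : nat) (A : {set word n q}) : rat :=
  ((\sum_(x in A) \sum_(y in A) dH x y)%N%:R / 2)%R.

(* Main.v *)
Require Import Defs.
From mathcomp Require Import all_boot all_order all_algebra.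
From mathcomp Require Import zify.
Import Order.TTheory GRing.Theory Num.Theory.
Set Implicit Arguments. Unset Strict Implicit.

Lemma card_sumb (T : finType) (P : pred T) : #|[set i | P i]| = \sum_i P i.
Proof.
rewrite -sum1_card big_mkcond /=; apply: eq_bigr => i _; rewrite inE; by case: (P i).
Qed.

Lemma sum_inb (T : finType) (B : {set T}) : \sum_i (i \in B) = #|B|.
Proof. rewrite -sum1_card [RHS]big_mkcond /=; apply: eq_bigr => i _; by case: (i \in B). Qed.

Lemma amgm2 (u v : nat) : u * v * 2 <= u * u + v * v.
Proof.
case: (leqP u v) => h.
  rewrite -(subnKC h); set k := v - u; clearbody k. nia.
rewrite -(subnKC (ltnW h)); set k := u - v; clearbody k. nia.
Qed.

Section S.
Variables (n q : nat) (A : {set word n q}).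

Definition s (i : 'I_n) : nat := \sum_(x in A) \sum_(y in A) (x i != y i).
Definition Rset := [set i : 'I_n | [exists x in A, exists y in A, x i != y i]].

Lemma S_eq : \sum_(x in A) \sum_(y in A) dH x y = \sum_i s i.
Proof.
rewrite /s.
transitivity (\sum_(x in A) \sum_i \sum_(y in A) (x i != y i)).
  apply: eq_bigr => x _; rewrite [RHS]exchange_big /=; apply: eq_bigr => y _.
  by rewrite /dH card_sumb.
by rewrite exchange_big.
Qed.

Lemma s0 i : i \notin Rset -> s i = 0.
Proof.
move=> H; rewrite /s big1 // => x Hx; rewrite big1 // => y Hy.
case E: (x i != y i) => //; exfalso; move/negP: H; apply.
rewrite inE; apply/existsP; exists x; rewrite Hx /=; apply/existsP; exists y; by rewrite Hy E.
Qed.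

Lemma s_hi i : s i <= #|A| * (#|A| - 1).
Proof.
rewrite /s -sum_nat_const; apply: leq_sum => x Hx.
rewrite (bigD1 x) //= eqxx /= add0n.
apply: leq_trans (_ : \sum_(y in A | y != x) 1 <= _).
  by apply: leq_sum => y _; rewrite leq_b1.
rewrite -sum1_card [\sum_(y in A) 1](bigD1 x) //=; lia.
Qed.

Lemma s_lo i : i \in Rset -> 2 * (#|A| - 1) <= s i.
Proof.
rewrite inE => /existsP [x0 /andP [Hx0 /existsP [y0 /andP [Hy0 Hne]]]].
set a := x0 i.
set b := \sum_(y in A) (y i == a).
set c := \sum_(y in A) (y i != a).
have Hbc : b + c = #|A|.
  rewrite /b /c -big_split /= -sum1_card; apply: eq_bigr => y _; by case: (y i == a).
have Hb : 1 <= b by rewrite /b (bigD1 x0) //= eqxx.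
have Hc : 1 <= c by rewrite /c (bigD1 y0) //= eq_sym Hne.
have H : \sum_(x in A) ((x i == a) * c + (x i != a) * b) <= s i.
  rewrite /s; apply: leq_sum => x Hx.
  case E: (x i == a) => /=.
    rewrite mul1n mul0n addn0 /c (eqP E); apply: leq_sum => y _; by rewrite eq_sym.
  rewrite mul0n mul1n add0n /b; apply: leq_sum => y _.
  case E2: (y i == a) => //=; by rewrite (eqP E2) E.
have H2 : \sum_(x in A) ((x i == a) * c + (x i != a) * b) = b * c + c * b.
  rewrite big_split /= -!big_distrl /=. done.
rewrite H2 in H; clearbody b c; nia.
Qed.

Lemma s_cs i : q * s i <= (q - 1) * #|A| ^ 2.
Proof.
set c := fun a : 'I_q => \sum_(x in A) (x i == a).
have one x : \sum_(a < q) (x i == a) = 1.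
  rewrite (bigD1 (x i)) //= eqxx big1 // => a Ha; by rewrite eq_sym (negbTE Ha).
have Hsum : \sum_a c a = #|A|.
  rewrite /c exchange_big /= -sum1_card; apply: eq_bigr => x _; exact: one.
have He : s i + \sum_a c a * c a = #|A| * #|A|.
  have -> : \sum_a c a * c a = \sum_(x in A) \sum_(y in A) (x i == y i).
    transitivity (\sum_a \sum_(x in A) \sum_(y in A) ((x i == a) * (y i == a))).
      apply: eq_bigr => a _; rewrite /c big_distrl /=; apply: eq_bigr => x _.
      by rewrite big_distrr.
    rewrite exchange_big /=; apply: eq_bigr => x _; rewrite exchange_big /=.
    apply: eq_bigr => y _.
    rewrite (bigD1 (x i)) //= eqxx mul1n big1 ?addn0; first by rewrite eq_sym.
    move=> a Ha; by rewrite eq_sym (negbTE Ha).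
  rewrite /s -big_split /= -sum_nat_const; apply: eq_bigr => x _.
  rewrite -big_split /= -sum1_card; apply: eq_bigr => y _; by case: eqP.
have HCS : #|A| * #|A| <= q * \sum_a c a * c a.
  rewrite -Hsum big_distrl /=.
  rewrite -leq_double -!muln2.
  have -> : (q * \sum_a c a * c a) * 2 = \sum_(a < q) \sum_(b < q) (c a * c a + c b * c b).
    under [RHS]eq_bigr => a _ do rewrite big_split /= big_const_ord iter_addn_0.
    rewrite big_split /= big_const_ord iter_addn_0 -big_distrl /=; lia.
  have -> : (\sum_(a < q) c a * \sum_(b < q) c b) * 2 = \sum_(a < q) \sum_(b < q) (c a * c b * 2).
    rewrite big_distrl /=; apply: eq_bigr => a _.
    by rewrite big_distrr /= big_distrl.
  apply: leq_sum => a _; apply: leq_sum => b _. exact: amgm2.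
clearbody c. nia.
Qed.
End S.

Lemma sum_hi (n : nat) (B : {set 'I_n}) (f : 'I_n -> nat) U :
  (forall i, f i <= (i \in B) * U) -> \sum_i f i <= #|B| * U.
Proof.
move=> H; rewrite -sum_inb big_distrl /=; exact: leq_sum => i _.
Qed.

Lemma sum_lo (n : nat) (B : {set 'I_n}) (f : 'I_n -> nat) U :
  (forall i, (i \in B) * U <= f i) -> #|B| * U <= \sum_i f i.
Proof.
move=> H; rewrite -sum_inb big_distrl /=; exact: leq_sum => i _.
Qed.

Lemma natfacts n q (A : {set word n q}) :
  (1 <= q)%N -> (2 <= #|A|)%N ->
  let S := \sum_(x in A) \sum_(y in A) dH x y in
  let m := #|A| in let R := Rk A in
  [/\ 2 * m * R <= S + 2 * R, S + m * R <= m * m * R &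
      q * S + m ^ 2 * R <= q * m ^ 2 * R].
Proof.
move=> hq hA S m R; rewrite /S S_eq.
have hR : R = #|Rset A| by [].
have L1 := @sum_lo n (Rset A) (s A) (2 * (#|A| - 1)).
have L2 := @sum_hi n (Rset A) (s A) (#|A| * (#|A| - 1)).
have L3 := @sum_hi n (Rset A) (fun i => q * s A i) ((q - 1) * #|A| ^ 2).
have H1 : #|Rset A| * (2 * (#|A| - 1)) <= \sum_i s A i.
  apply: L1 => i; case: (boolP (i \in Rset A)) => h /=; first by rewrite mul1n s_lo.
  by rewrite mul0n.
have H2 : \sum_i s A i <= #|Rset A| * (#|A| * (#|A| - 1)).
  apply: L2 => i; case: (boolP (i \in Rset A)) => h /=; first by rewrite mul1n s_hi.
  by rewrite mul0n s0.
have H3 : \sum_i q * s A i <= #|Rset A| * ((q - 1) * #|A| ^ 2).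
  apply: L3 => i; case: (boolP (i \in Rset A)) => h /=; first by rewrite mul1n s_cs.
  by rewrite mul0n s0 // muln0.
rewrite -big_distrr /= in H3.
rewrite -hR in H1 H2 H3. rewrite /m.
move: H1 H2 H3 hA; set T := \sum_i s A i; set M := #|A|; clearbody T M R => H1 H2 H3 hA.
move: H1 H2 H3.
have [k ->] : exists k, M = k.+1 by exists M.-1; lia.
have [p ->] : exists p, q = p.+1 by exists q.-1; lia.
rewrite ?subSS ?subn0 ?subn1 /= => H1 H2 H3.
split; nia.
Qed.

From mathcomp Require Import ring lra.
Local Open Scope ring_scope.

Theorem mainTheorem1 (n q : nat) (A : {set word n q}) :
  (2 <= n)%N -> (2 <= q)%N -> (2 <= #|A|)%N ->
  let m : rat := (#|A|)%:R in
  let qq : rat := q%:R in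
  let R : rat := (Rk A)%:R in
  ((qq <= m) ->
     2 * qq * DA A / ((qq - 1) * m ^+ 2) <= R /\ R <= DA A / (m - 1)) /\
  ((m < qq) -> (2 < q)%N ->
     2 * (qq - 2) * DA A / ((m ^+ 2 - 2) * (qq - 2) - (m - 2) ^+ 2) <= R
     /\ R <= DA A / (m - 1)).
Proof.
move=> hn hq hA m qq R.
have [N1 N2 N3] := natfacts (ltnW hq) hA.
have hm : 2 <= m by rewrite /m (ler_nat rat 2).
have hqq : 2 <= qq by rewrite /qq (ler_nat rat 2).
have hR : 0 <= R by rewrite /R ler0n.
have hq3' : (2 < q)%N -> 3 <= qq by move=> h; rewrite /qq (ler_nat rat 3).
rewrite /DA.
move: N1 N2 N3; set S := (\sum_(x in A) \sum_(y in A) dH x y)%N => N1 N2 N3.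
have E1 : 2 * m * R <= S%:R + 2 * R.
  rewrite /m /R; move: N1; rewrite -(ler_nat rat) !natrD !natrM; lra.
have E2 : S%:R + m * R <= m * m * R.
  rewrite /m /R; move: N2; rewrite -(ler_nat rat) !natrD !natrM; lra.
have E3 : qq * S%:R + m ^+ 2 * R <= qq * m ^+ 2 * R.
  rewrite /m /R /qq; move: N3; rewrite -(ler_nat rat) !natrD !natrM ?natrX; lra.
move: E1 E2 E3; clearbody m qq R; set s := (S%:R : rat); clearbody s => E1 E2 E3.
have up : R <= s / 2 / (m - 1).
  rewrite ler_pdivlMr; last lra. lra.
split=> [hqm | hmq hq2]; split => //.
  rewrite ler_pdivrMr; last by apply: mulr_gt0; [lra | nra].
  nra.
have hq3 := hq3' hq2.
have Xpos : 0 < (m ^+ 2 - 2) * (qq - 2) - (m - 2) ^+ 2.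
  have h1 : 0 <= (m - 2) * (qq - m) by apply: mulr_ge0; lra.
  have h2 : 0 < m * (m - 1) * (qq - 2) by apply: mulr_gt0; [nra | lra].
  nra.
rewrite ler_pdivrMr //.
have h1 : 0 <= R * ((m - 2) * (qq - m)) by apply: mulr_ge0 => //; apply: mulr_ge0; lra.
have h2 : 0 <= (qq - 2) * (m * m * R - s - m * R) by apply: mulr_ge0; lra.
nra.
Qed.
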